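(* Let $b\in\mathbb{N}$, $0\le a\le b-1$, and let $m,n\ge2$ be the minimal integers with $ma\equiv a\pmod b$ and $a^n\equiv a\pmod b$ (assumed to exist). Put $I=(m-1)a/b$ and $J=(a^n-a)/b$ (these are nonnegative integers). Let $q\in\mathbb{N}$ and for $k=0,\dots,q-1$ let $x''_k=\{a+bk+bql : l\in\mathbb{Z}\}$ be the secondary classes. Define $\nu''_m[x''_{k_1},\dots,x''_{k_m}]$ to be the secondary class containing $x_{k_1}+\dots+x_{k_m}$ and $\mu''_n[x''_{k_1},\dots,x''_{k_n}]$ the secondary class containing $x_{k_1}\cdots x_{k_n}$, where $x_{k_i}$ is any representative of $x''_{k_i}$. Then these operations are well defined, commutative, satisfy polyadic distributivity, and $$\nu''_m[x''_{k_1},\dots,x''_{k_m}]=x''_{k_{add}},\qquad k_{add}\equiv (k_1+\dots+k_m)+I \pmod q,$$ $$\mu''_n[x''_{k_1},\dots,x''_{k_n}]=x''_{k_{mult}},\qquad k_{mult}\equiv \sum_{j=1}^{n} a^{n-j}b^{j-1}e_j(k_1,\dots,k_n)+J \pmod q,$$ where $e_j$ is the $j$-th elementary symmetric polynomial (so $e_1=k_1+\dots+k_n$, $e_2=\sum_{i<j}k_ik_j$, …, $e_n=k_1\cdots k_n$).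
   Context: Polyadic distributivity means: for all elements, $\mu''_n[\nu''_m[y_1,\dots,y_m],x_2,\dots,x_n]=\nu''_m[\mu''_n[y_1,x_2,\dots,x_n],\dots,\mu''_n[y_m,x_2,\dots,x_n]]$ (and likewise with the sum in any argument position of $\mu''_n$). *)

(* Defs.v *)
From mathcomp Require Import all_boot all_order all_algebra all_fingroup.
Set Implicit Arguments. Unset Strict Implicit. Unset Printing Implicit Defensive.
Import Order.TTheory GRing.Theory Num.Theory.
Local Open Scope ring_scope.

Definition sec (a b q k : nat) : int -> Prop :=
  fun x => exists l : int, x = a%:Z + b%:Z * k%:Z + b%:Z * q%:Z * l.

Definition elem_sym (n : nat) (ks : 'I_n -> nat) (j : nat) : nat :=
  (\sum_(s : {set 'I_n} | #|s| == j) \prod_(i in s) ks i)%N.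

Definition upd (T : Type) (n : nat) (f : 'I_n -> T) (p : 'I_n) (y : T) : 'I_n -> T :=
  fun i => if i == p then y else f i.

(* Main.v *)
Require Import Defs.
From mathcomp Require Import all_boot all_order all_algebra all_fingroup zify ring lra.
Import Order.TTheory GRing.Theory Num.Theory.

Lemma elem_sym0 n (k : 'I_n -> nat) : elem_sym k 0 = 1.
Proof.
rewrite /elem_sym (eq_bigl (pred1 set0)) ?big_pred1_eq ?big_set0 // => s.
by rewrite /= cards_eq0.
Qed.

Lemma term_eq n a b (k : 'I_n -> nat) (J : {set 'I_n}) :
  \prod_(i < n) (if i \in J then b * k i else a) =
  a ^ (n - #|J|) * b ^ #|J| * \prod_(i in J) k i.
Proof.
rewrite (bigID (fun i => i \in J)) /=.
rewrite (eq_bigr (fun i => b * k i)); last by move=> i ->.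
rewrite [X in _ * X](eq_bigr (fun i => a)); last by move=> i Hi; rewrite (negbTE Hi).
rewrite big_split /= !prod_nat_const.
have -> : #|[pred i | i \notin J]| = n - #|J|.
  have HC : (#|J| + #|~: J| = n)%N by rewrite cardsC card_ord.
  have -> : #|[pred i | i \notin J]| = #|~: J| by apply: eq_card => i; rewrite !inE.
  lia.
rewrite mulnC mulnA; congr (_ * _ * _).
Qed.

Lemma prod_expand n a b (k : 'I_n -> nat) :
  \prod_(i < n) (a + b * k i) =
  a ^ n + b * \sum_(j < n) a ^ (n - j.+1) * b ^ j * elem_sym k j.+1.
Proof.
rewrite (eq_bigr (fun i => b * k i + a)); last by move=> i _; rewrite addnC.
rewrite (@bigA_distr nat 0 1 muln addn _ (fun i => b * k i) (fun i => a)).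
under eq_bigr => J _ do rewrite term_eq.
rewrite (partition_big (fun J : {set 'I_n} => (inord #|J| : 'I_n.+1)) xpredT) //=.
have H : forall j : 'I_n.+1,
   \sum_(J : {set 'I_n} | (inord #|J| : 'I_n.+1) == j) a ^ (n - #|J|) * b ^ #|J| * \prod_(i in J) k i
   = a ^ (n - j) * b ^ j * elem_sym k j.
  move=> j; rewrite /elem_sym big_distrr /=.
  apply: eq_big => J.
    rewrite -val_eqE /= inordK //.
    by rewrite ltnS; have := max_card (mem J); rewrite card_ord.
  move/eqP => <-; rewrite inordK //.
  by rewrite ltnS; have := max_card (mem J); rewrite card_ord.
rewrite (eq_bigr _ (fun j _ => H j)) big_ord_recl /= elem_sym0 subn0 muln1 expn0 muln1.
congr (_ + _); rewrite big_distrr /=; apply: eq_bigr => j _.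
by rewrite /bump /= add1n expnS; ring.
Qed.

Local Open Scope ring_scope.

Lemma uniq_aux (k K q: int) l l' : 0 <= k -> k < q -> 0 <= K -> K < q -> k + q * l = K + q * l' -> k = K.
Proof.
move=> h1 h2 h3 h4 e.
have e2 : k - K = q * (l' - l) by rewrite mulrBr; lia.
have [t0|t0|t0] := ltgtP (l' - l) 0.
- have : q * (l' - l) <= - q by nia.
  lia.
- have : q <= q * (l' - l) by nia.
  lia.
- by move: e2; rewrite t0 mulr0; lia.
Qed.

Lemma sec_uniq a b q (k K : 'I_q) x : (0 < b)%N -> sec a b q k x -> sec a b q K x -> k = K.
Proof.
move=> b0 [l ->] [l' e]; apply: val_inj => /=.
have e1 : (b%:Z) * (k%:Z + q%:Z * l) = b%:Z * (K%:Z + q%:Z * l') by lia.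
have e2 : k%:Z + q%:Z * l = K%:Z + q%:Z * l' by nia.
have := @uniq_aux k%:Z K%:Z q%:Z l l'.
have := ltn_ord k; have := ltn_ord K.
lia.
Qed.

Arguments sec_uniq {a b q k K x}.

Lemma sec_mk a b q (x : int) (N : nat) c : (0 < q)%N ->
  x = a%:Z + b%:Z * N%:Z + b%:Z * q%:Z * c -> sec a b q (N %% q) x.
Proof.
move=> q0 ->; exists (c + (N %/ q)%N%:Z).
rewrite {1}(divn_eq N q) PoszD PoszM; ring.
Qed.

Lemma prod_cong (I : Type) (r : seq I) (d : int) (u v : I -> int) :
  (forall i, exists c, u i = v i + d * c) ->
  exists c, \prod_(i <- r) u i = \prod_(i <- r) v i + d * c.
Proof.
move=> h; elim: r => [|i r [C IH]]; first by exists 0; rewrite !big_nil; ring.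
have [c hc] := h i.
exists (c * \prod_(j <- r) v j + v i * C + d * c * C).
by rewrite !big_cons IH hc; ring.
Qed.

Lemma sum_cong (I : Type) (r : seq I) (d : int) (u v : I -> int) :
  (forall i, exists c, u i = v i + d * c) ->
  exists c, \sum_(i <- r) u i = \sum_(i <- r) v i + d * c.
Proof.
move=> h; elim: r => [|i r [C IH]]; first by exists 0; rewrite !big_nil; ring.
have [c hc] := h i.
exists (c + C).
by rewrite !big_cons IH hc; ring.
Qed.

Lemma qpos q (x : 'I_q) : (0 < q)%N.
Proof. by apply: leq_ltn_trans (ltn_ord x). Qed.

Lemma PoszSum (I : Type) (r : seq I) (F : I -> nat) :
  (\sum_(i <- r) F i)%N%:Z = \sum_(i <- r) (F i)%:Z.
Proof. by rewrite (big_morph Posz PoszD (erefl _)). Qed.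

Lemma PoszProd (I : Type) (r : seq I) (F : I -> nat) :
  (\prod_(i <- r) F i)%N%:Z = \prod_(i <- r) (F i)%:Z.
Proof. by rewrite (big_morph Posz PoszM (erefl _)). Qed.

Theorem mainTheorem2 (b a m n q : nat)
  (hab : (a < b)%N)
  (hm2 : (2 <= m)%N) (hm : (m * a = a %[mod b])%N)
  (hmmin : forall m' : nat, (2 <= m')%N -> (m' < m)%N -> (m' * a <> a %[mod b])%N)
  (hn2 : (2 <= n)%N) (hn : (a ^ n = a %[mod b])%N)
  (hnmin : forall n' : nat, (2 <= n')%N -> (n' < n)%N -> (a ^ n' <> a %[mod b])%N) :
  let I := ((m - 1) * a %/ b)%N in
  let J := ((a ^ n - a) %/ b)%N in
  exists (nu : ('I_m -> 'I_q) -> 'I_q) (mu : ('I_n -> 'I_q) -> 'I_q),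
    [/\ (* nu'' is well defined: the secondary class containing the sum *)
        (forall (ks : 'I_m -> 'I_q) (x : 'I_m -> int),
            (forall i, sec a b q (ks i) (x i)) ->
            sec a b q (nu ks) (\sum_(i < m) x i) /\
            (forall k : 'I_q, sec a b q k (\sum_(i < m) x i) -> k = nu ks)),
        (* mu'' is well defined: the secondary class containing the product *)
        (forall (ks : 'I_n -> 'I_q) (x : 'I_n -> int),
            (forall i, sec a b q (ks i) (x i)) ->
            sec a b q (mu ks) (\prod_(i < n) x i) /\
            (forall k : 'I_q, sec a b q k (\prod_(i < n) x i) -> k = mu ks)),
        (* commutativity *)
        (forall (s : 'S_m) (ks : 'I_m -> 'I_q), nu (fun i => ks (s i)) = nu ks) /\
        (forall (s : 'S_n) (ks : 'I_n -> 'I_q), mu (fun i => ks (s i)) = mu ks),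
        (* polyadic distributivity, in every argument position p of mu'' *)
        (forall (p : 'I_n) (xs : 'I_n -> 'I_q) (ys : 'I_m -> 'I_q),
            mu (upd xs p (nu ys)) = nu (fun j => mu (upd xs p (ys j))))
      & (* explicit formulas *)
        (forall ks : 'I_m -> 'I_q,
            (nu ks : nat) = ((\sum_(i < m) ks i + I) %% q)%N) /\
        (forall ks : 'I_n -> 'I_q,
            (mu ks : nat) =
            ((\sum_(j < n) a ^ (n - j.+1) * b ^ j * elem_sym (fun i : 'I_n => (ks i : nat)) j.+1
              + J) %% q)%N)].
Proof.
move=> I J.
have b0 : (0 < b)%N by apply: leq_ltn_trans hab.
have m0 : (0 < m)%N by apply: leq_trans hm2.
have n0 : (0 < n)%N by apply: leq_trans hn2.
have hI : ((m - 1) * a = I * b)%N.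
  rewrite /I divnK // mulnBl mul1n -eqn_mod_dvd; first by apply/eqP.
  by rewrite leq_pmull.
have aan : (a <= a ^ n)%N.
  case: a {hab hm hmmin hn hnmin I J hI} => [|a] //.
  by rewrite -{1}(expn1 a.+1) leq_pexp2l.
have hJ : (a ^ n - a = J * b)%N.
  by rewrite /J divnK // -eqn_mod_dvd //; apply/eqP.
pose rep (k : nat) : int := a%:Z + b%:Z * k%:Z.
have rep_sec : forall k : 'I_q, sec a b q k (rep k).
  by move=> k; exists 0; rewrite /rep mulr0 addr0.
pose nuF (ks : 'I_m -> 'I_q) := (\sum_(i < m) ks i + I)%N.
pose muF (ks : 'I_n -> 'I_q) :=
  ((\sum_(j < n) a ^ (n - j.+1) * b ^ j * elem_sym (fun i : 'I_n => (ks i : nat)) j.+1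
              + J))%N.
pose nu (ks : 'I_m -> 'I_q) : 'I_q := Ordinal (ltn_pmod (nuF ks) (@qpos q (ks (Ordinal m0)))).
pose mu (ks : 'I_n -> 'I_q) : 'I_q := Ordinal (ltn_pmod (muF ks) (@qpos q (ks (Ordinal n0)))).
have WDnu : forall (ks : 'I_m -> 'I_q) (x : 'I_m -> int),
    (forall i, sec a b q (ks i) (x i)) -> sec a b q (nu ks) (\sum_(i < m) x i).
  move=> ks x hx.
  have [c hc] := @sum_cong _ (index_enum 'I_m) (b%:Z * q%:Z) x (fun i => rep (ks i))
    (fun i => let: ex_intro l hl := hx i in ex_intro _ l hl).

  rewrite hc.
  have eN : (\sum_(i < m) (a + b * ks i) = a + b * (\sum_(i < m) ks i + I))%N.
    rewrite big_split /= sum_nat_const card_ord -big_distrr /=.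
    have e : (m * a = a + I * b)%N.
      by rewrite -hI mulnBl mul1n subnKC // leq_pmull.
    rewrite e; lia.
  have eZ : \sum_(i < m) rep (ks i) = a%:Z + b%:Z * (\sum_(i < m) ks i + I)%N%:Z.
    by rewrite -PoszM -PoszD -eN PoszSum; apply: eq_bigr => i _; rewrite PoszD PoszM.
  rewrite eZ.
  have HH := (@sec_mk a b q _ (\sum_(i < m) ks i + I)%N c (@qpos q (ks (Ordinal m0))) (erefl _)). exact HH.
have WDmu : forall (ks : 'I_n -> 'I_q) (x : 'I_n -> int),
    (forall i, sec a b q (ks i) (x i)) -> sec a b q (mu ks) (\prod_(i < n) x i).
  move=> ks x hx.
  have [c hc] := @prod_cong _ (index_enum 'I_n) (b%:Z * q%:Z) x (fun i => rep (ks i))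
    (fun i => let: ex_intro l hl := hx i in ex_intro _ l hl).
  rewrite hc.
  have eP : (\prod_(i < n) (a + b * ks i) = a + b * muF ks)%N.
    rewrite prod_expand /muF.
    have e : (a ^ n = a + J * b)%N by rewrite -hJ subnKC.
    rewrite e; lia.
  have eZ : \prod_(i < n) rep (ks i) = a%:Z + b%:Z * (muF ks)%:Z.
    by rewrite -PoszM -PoszD -eP PoszProd; apply: eq_bigr => i _; rewrite PoszD PoszM.
  rewrite eZ.
  have HH := (@sec_mk a b q _ (muF ks) c (@qpos q (ks (Ordinal n0))) (erefl _)). exact HH.
exists nu, mu; split.
- move=> ks x hx; split; first exact: WDnu.
  by move=> k hk; exact: sec_uniq b0 hk (WDnu ks x hx).
- move=> ks x hx; split; first exact: WDmu.
  by move=> k hk; exact: sec_uniq b0 hk (WDmu ks x hx).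
- split=> s ks.
    have h1 := WDnu (fun i => ks (s i)) (fun i => rep (ks (s i))) (fun i => rep_sec _).
    have h2 := WDnu ks (fun i => rep (ks i)) (fun i => rep_sec _).
    have e : \sum_(i < m) rep (ks (s i)) = \sum_(i < m) rep (ks i).
      by rewrite [RHS](reindex_inj (@perm_inj _ s)).
    rewrite e in h1; exact: sec_uniq b0 h1 h2.
  have h1 := WDmu (fun i => ks (s i)) (fun i => rep (ks (s i))) (fun i => rep_sec _).
  have h2 := WDmu ks (fun i => rep (ks i)) (fun i => rep_sec _).
  have e : \prod_(i < n) rep (ks (s i)) = \prod_(i < n) rep (ks i).
    by rewrite [RHS](reindex_inj (@perm_inj _ s)).
  rewrite e in h1; exact: sec_uniq b0 h1 h2.
- move=> p xs ys.
  pose X i := rep (xs i); pose Y j := rep (ys j).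
  have hup : forall (ks : 'I_n -> 'I_q) (k : 'I_q) (y : int), sec a b q k y ->
      forall i, sec a b q (upd ks p k i) (upd (fun i => rep (ks i)) p y i).
    by move=> ks k y hy i; rewrite /upd; case: (i == p).
  have h1 := WDmu (upd xs p (nu ys)) _ (hup xs (nu ys) _ (WDnu ys Y (fun j => rep_sec _))).
  have h2 := WDnu (fun j => mu (upd xs p (ys j))) (fun j => \prod_(i < n) upd X p (Y j) i)
    (fun j => WDmu _ _ (hup xs (ys j) _ (rep_sec _))).
  have f : forall y, \prod_(i < n) upd X p y i = y * \prod_(i < n | i != p) X i.
    move=> y; rewrite (bigD1 p) //= /upd eqxx; congr (_ * _).
    by apply: eq_bigr => i /negbTE ->.
  have e : \sum_(j < m) \prod_(i < n) upd X p (Y j) i = \prod_(i < n) upd X p (\sum_(j < m) Y j) i.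
    by rewrite f; under eq_bigr do rewrite f; rewrite mulr_suml.
  rewrite e in h2; exact: sec_uniq b0 h1 h2.
- by split.
Qed.
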